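(* Let $i\in I$ and suppose there is $k\in I$ with $C_{k,i}<-1$. Then for every $w\in W$ the monomial $Y_{w(\omega_i),1}:=T_w(Y_{i,1})$ is a Laurent monomial in the elements $W_{j,b}$, $j\in I$, $b\in\mathbb{C}^\times$.
   Context: Let $\mathfrak{g}$ be a finite-dimensional simple complex Lie algebra with Dynkin index set $I$, Cartan matrix $C=(C_{i,j})$, symmetrizing integers $d_i$ (relatively prime, $(d_iC_{i,j})$ symmetric), lacing number $d=\max_i d_i$, fundamental weights $\omega_i$ and Weyl group $W$. Fix $q\in\mathbb{C}^\times$ not a root of unity, $q_i=q^{d_i}$. Let $\mathcal{Y}=\mathbb{Z}[Y_{i,a}^{\pm1}]_{i\in I,a\in\mathbb{C}^\times}$ and $A_{i,a}=Y_{i,aq_i^{-1}}Y_{i,aq_i}\big(\prod_{C_{j,i}=-1}Y_{j,a}\prod_{C_{j,i}=-2}Y_{j,aq^{-1}}Y_{j,aq}\prod_{C_{j,i}=-3}Y_{j,aq^{-2}}Y_{j,a}Y_{j,aq^2}\big)^{-1}$. Chari operators: ring automorphisms $T_i$ of $\mathcal{Y}$ with $T_i(Y_{i,a})=Y_{i,a}A_{i,aq_i}^{-1}$, $T_i(Y_{j,a})=Y_{j,a}$ ($j\ne i$); they satisfy the braid relations and $T_w:=T_{i_1}\cdots T_{i_k}$ for a reduced decomposition $w=s_{i_1}\cdots s_{i_k}$. $W_{j,b}$ denotes $Y_{j,b}$ if $d_j=d$, $Y_{j,bq^{-1}}Y_{j,bq}$ if $d_j=d-1$, $Y_{j,bq^{-2}}Y_{j,b}Y_{j,bq^2}$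 if $d_j=d-2$. *)

(* Defs.v *)
From HB Require Import structures.
From mathcomp Require Import all_boot all_order all_algebra.
From mathcomp Require Import reals.
From mathcomp Require Import complex.
From mathcomp Require Import freeg.

Set Implicit Arguments.
Unset Strict Implicit.
Unset Printing Implicit Defensive.

Import Order.TTheory GRing.Theory Num.Theory.
Local Open Scope ring_scope.

(* Cartan matrix of a finite-dimensional simple complex Lie algebra,   *)
(* with index set I = 'I_n, together with its symmetrizing integers d. *)
Definition simple_cartan (n : nat) (C : 'M[int]_n) (d : 'I_n -> nat) : Prop :=
     (0 < n)%N
  /\ (forall i, C i i = 2)
  /\ (forall i j, i != j -> C i j <= 0)
  /\ (forall i j, C i j = 0 <-> C j i = 0)
  /\ (forall i, (0 < d i)%N)
  /\ (forall i j, (d i)%:Z * C i j = (d j)%:Z * C j i)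
  /\ (\big[gcdn/0%N]_(i < n) d i = 1%N)
  /\ (forall x : 'I_n -> rat, (exists i, x i != 0) ->
         0 < \sum_(i < n) \sum_(j < n) x i * ((d i)%:R * (C i j)%:~R) * x j)
  /\ (forall S : {set 'I_n},
         (forall i j, i \in S -> j \notin S -> C i j = 0) ->
         S = set0 \/ S = setT).

Definition lacing (n : nat) (d : 'I_n -> nat) : nat := (\max_(i < n) d i)%N.

(* Weyl group: generated by the simple reflections s_i acting on the   *)
(* weight lattice (coordinates w.r.t. the fundamental weights),        *)
(*   s_i(lambda) = lambda - lambda_i alpha_i,                          *)
(*   alpha_i = sum_j C_{j,i} omega_j.                                  *)
Definition sref (n : nat) (C : 'M[int]_n) (i : 'I_n) (l : 'I_n -> int) : 'I_n -> int :=
  fun j => l j - l i * C j i.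

Definition wact (n : nat) (C : 'M[int]_n) (s : seq 'I_n) : ('I_n -> int) -> ('I_n -> int) :=
  foldr (fun i f => fun l => sref C i (f l)) id s.

Definition reduced_word (n : nat) (C : 'M[int]_n) (s : seq 'I_n) : Prop :=
  forall t : seq 'I_n, (forall l j, wact C t l j = wact C s l j) -> (size s <= size t)%N.

(* Laurent monomials in the Y_{i,a} : free abelian group on I x C      *)
(* (written additively: monomial product = +, inverse = -).           *)
Definition Mon (R : realType) (n : nat) := {freeg ('I_n * R[i]) / int}.

Definition Ym (R : realType) (n : nat) (j : 'I_n) (a : R[i]) : Mon R n := << (j, a) >>.

Definition Am (R : realType) (n : nat) (C : 'M[int]_n) (d : 'I_n -> nat) (q : R[i])
    (i : 'I_n) (a : R[i]) : Mon R n :=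
  let qi := q ^+ d i in
  Ym i (a / qi) + Ym i (a * qi)
  - ( \sum_(j < n | C j i == -1) Ym j a
    + \sum_(j < n | C j i == -2) (Ym j (a / q) + Ym j (a * q))
    + \sum_(j < n | C j i == -3) (Ym j (a / q ^+ 2) + Ym j a + Ym j (a * q ^+ 2))).

Definition Tchari (R : realType) (n : nat) (C : 'M[int]_n) (d : 'I_n -> nat) (q : R[i])
    (i : 'I_n) : Mon R n -> Mon R n :=
  fglift (fun ja : 'I_n * R[i] =>
    if ja.1 == i then Ym ja.1 ja.2 - Am C d q i (ja.2 * q ^+ d i)
    else Ym ja.1 ja.2 : Mon R n).

Definition Tword (R : realType) (n : nat) (C : 'M[int]_n) (d : 'I_n -> nat) (q : R[i])
    (s : seq 'I_n) : Mon R n -> Mon R n :=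
  foldr (fun i f => fun m => Tchari C d q i (f m)) id s.

Definition Wm (R : realType) (n : nat) (d : 'I_n -> nat) (q : R[i])
    (j : 'I_n) (b : R[i]) : Mon R n :=
  if d j == lacing d then Ym j b
  else if (d j).+1 == lacing d then Ym j (b / q) + Ym j (b * q)
  else if (d j).+2 == lacing d then Ym j (b / q ^+ 2) + Ym j b + Ym j (b * q ^+ 2)
  else 0.

Definition W_laurent (R : realType) (n : nat) (d : 'I_n -> nat) (q : R[i]) (m : Mon R n) : Prop :=
  exists s : seq ('I_n * R[i] * int),
    all (fun x => x.1.2 != 0) s /\
    m = \sum_(x <- s) x.2 *: Wm d q x.1.1 x.1.2.

(* Main.v *)
Require Import Defs.
From HB Require Import structures.
From mathcomp Require Import all_boot all_order all_algebra.
From mathcomp Require Import reals complex freeg.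
From mathcomp Require Import ring zify.
Import Order.TTheory GRing.Theory Num.Theory.
Local Open Scope ring_scope.
Section Comb.
Variables (n : nat) (C : 'M[int]_n) (d : 'I_n -> nat).
Hypothesis hCjj : forall j, C j j = 2.
Hypothesis hCneg : forall j k, j != k -> C j k <= 0.

Definition Bm i l : int := (d i)%:Z * C i l.
Definition Q (z : 'I_n -> int) := \sum_i \sum_l z i * Bm i l * z l.

Lemma Qle0 (z : 'I_n -> int) : (forall i, 0 <= z i) -> (forall i, 0 < z i -> \sum_l Bm i l * z l <= 0) -> Q z <= 0.
Proof.
move=> hz hr; rewrite /Q; apply: sumr_le0 => i _.
under eq_bigr do rewrite -mulrA.
rewrite -mulr_sumr.
have := hz i; rewrite le_eqVlt => /orP [/eqP <-|zp]; first by rewrite mul0r.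
by rewrite mulr_ge0_le0 // ?hr // ltW.
Qed.

Lemma row_le i (T : seq 'I_n) (z : 'I_n -> int) : uniq T -> i \in T -> (forall l, 0 <= z l) ->
  \sum_l Bm i l * z l <= \sum_(l <- T) Bm i l * z l.
Proof.
move=> uT iT hz; rewrite (big_uniq _ uT) (bigID (fun l => l \in T)) /=.
rewrite -[X in _ <= X]addr0 lerD2l; apply: sumr_le0 => l lT.
have il : i != l by apply: contraNneq lT => <-.
by rewrite mulr_le0_ge0 // /Bm mulr_ge0_le0 // hCneg.
Qed.

Lemma Kconf (s : seq 'I_n) (x0 : 'I_n) :
  (forall z : 'I_n -> int, (exists i, z i != 0) -> 0 < Q z) ->
  uniq s -> (2 < size s)%N ->
  (forall k, (0 < k)%N -> (k.+2 < size s)%N ->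
     C (nth x0 s k) (nth x0 s k.+1) = -1 /\ C (nth x0 s k.+1) (nth x0 s k) = -1) ->
  C (nth x0 s 0) (nth x0 s 1) < 0 ->
  2 <= C (nth x0 s 0) (nth x0 s 1) * C (nth x0 s 1) (nth x0 s 0) ->
  C (nth x0 s (size s).-1) (nth x0 s (size s).-2) < 0 ->
  2 <= C (nth x0 s (size s).-1) (nth x0 s (size s).-2) * C (nth x0 s (size s).-2) (nth x0 s (size s).-1) ->
  False.
Proof.
move=> pd us L3 hint a1 a2 w1 w2.
move: L3 hint a1 a2 w1 w2; set L := size s => L3 hint a1 a2 w1 w2.
pose wt k : int := if k == 0%N then - C (nth x0 s 0) (nth x0 s 1)
  else if k == L.-1 then - C (nth x0 s L.-1) (nth x0 s L.-2) else 2.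
have wtE0 : wt 0%N = - C (nth x0 s 0) (nth x0 s 1) by [].
have wtEL : wt L.-1 = - C (nth x0 s L.-1) (nth x0 s L.-2).
  by rewrite /wt; case: ifP => [/eqP|_]; [lia|rewrite eqxx].
have wtEm k : (0 < k)%N -> (k < L.-1)%N -> wt k = 2.
  by move=> k0 kL; rewrite /wt; case: ifP => [/eqP|_]; [lia|case: ifP => // /eqP; lia].
have wt0 k : 0 <= wt k.
  by rewrite /wt; case: ifP => _; [lia|case: ifP => _; lia].
pose z i : int := if i \in s then wt (index i s) else 0.
have zs k : (k < L)%N -> z (nth x0 s k) = wt k.
  by move=> kL; rewrite /z mem_nth // index_uniq.
have hz i : 0 <= z i by rewrite /z; case: ifP.
have nz : exists i, z i != 0.
  by exists (nth x0 s 0); rewrite zs ?wtE0; [lia|lia].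
have := pd z nz; apply/negP; rewrite -leNgt; apply: Qle0 => // i zi.
have iS : i \in s by apply: contraTT zi; rewrite /z => /negPf ->.
have kL : (index i s < L)%N by rewrite index_mem.
have ei := nth_index x0 iS.
move: kL ei; set k := index i s => kL ei.
have nu a b : (a < L)%N -> (b < L)%N -> a != b -> nth x0 s a != nth x0 s b.
  by move=> aL bL ab; rewrite nth_uniq.
have dge := fun j => (leq0n (d j)).
have [k0|kn0] := eqVneq k 0%N.
  rewrite -ei k0.
  apply: le_trans (row_le _ [:: nth x0 s 0; nth x0 s 1] z _ _ hz) _.
    by rewrite /= inE nu //; lia.
    by rewrite inE eqxx.
  rewrite !big_cons big_nil !zs; try lia.
  rewrite wtE0 wtEm; try lia.
  by rewrite /Bm hCjj le_eqVlt; apply/orP; left; apply/eqP; ring.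
have [kl|knl] := eqVneq k L.-1.
  rewrite -ei kl.
  apply: le_trans (row_le _ [:: nth x0 s L.-1; nth x0 s L.-2] z _ _ hz) _.
    by rewrite /= inE nu //; lia.
    by rewrite inE eqxx.
  rewrite !big_cons big_nil !zs; try lia.
  rewrite wtEL (wtEm L.-2); try lia.
  by rewrite /Bm hCjj le_eqVlt; apply/orP; left; apply/eqP; ring.
have kp : k = k.-1.+1 by lia.
rewrite -ei.
apply: le_trans (row_le _ [:: nth x0 s k.-1; nth x0 s k; nth x0 s k.+1] z _ _ hz) _.
  by rewrite /= !inE !negb_or !nu //; lia.
  by rewrite !inE eqxx orbT.
rewrite !big_cons big_nil !zs; try lia.
rewrite (wtEm k); try lia.
have hprev : Bm (nth x0 s k) (nth x0 s k.-1) * wt k.-1 <= - 2 * (d (nth x0 s k))%:Z.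
  have [k1|k1] := eqVneq k 1%N.
    rewrite k1 /= wtE0 /Bm; nia.
  rewrite wtEm; try lia.
  have [_ h] := hint k.-1 ltac:(lia) ltac:(lia).
  rewrite -kp in h; rewrite /Bm h; lia.
have hnext : Bm (nth x0 s k) (nth x0 s k.+1) * wt k.+1 <= - 2 * (d (nth x0 s k))%:Z.
  have [k1|k1] := eqVneq k.+1 L.-1.
    have ek : k = L.-2 by lia.
    rewrite k1 wtEL /Bm ek; have := w2; nia.
  rewrite wtEm; try lia.
  have [h _] := hint k ltac:(lia) ltac:(lia).
  rewrite /Bm h; lia.
rewrite /Bm hCjj in hprev hnext *; move: hprev hnext; move: (wt k.-1) (wt k.+1) (d (nth x0 s k)) (C (nth x0 s k) (nth x0 s k.-1)) (C (nth x0 s k) (nth x0 s k.+1)) => u v D c1 c2. move=> h1 h2; rewrite addr0 addrA; apply: le_trans (lerD (lerD h1 (lexx _)) h2) _. by rewrite le_eqVlt; apply/orP; left; apply/eqP; ring.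
Qed.

Lemma sum_supp (F : 'I_n -> int) (T : seq 'I_n) : uniq T -> (forall i, i \notin T -> F i = 0) ->
  \sum_i F i = \sum_(i <- T) F i.
Proof.
move=> uT h; rewrite (big_uniq _ uT) (bigID (fun l => l \in T)) /=.
by rewrite [X in _ + X]big1 ?addr0 // => i /h.
Qed.

Hypothesis hd0 : forall j, (0 < d j)%N.
Hypothesis hpd : forall z : 'I_n -> int, (exists i, z i != 0) -> 0 < Q z.

Lemma hC3 j k : j != k -> C j k * C k j <= 3.
Proof.
move=> jk; rewrite leNgt; apply/negP => h4.
pose z i : int := if i == j then (2 * d k)%:Z else if i == k then - ((d j)%:Z * C j k) else 0.
have zj : z j = (2 * d k)%:Z by rewrite /z eqxx.
have zk : z k = - ((d j)%:Z * C j k) by rewrite /z eqxx eq_sym (negPf jk).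
have nz : exists i, z i != 0 by exists j; rewrite zj; have := hd0 k; lia.
have := hpd _ nz; apply/negP; rewrite -leNgt.
have uT : uniq [:: j; k] by rewrite /= inE jk.
have zT i : i \notin [:: j; k] -> z i = 0.
  by rewrite !inE negb_or => /andP [/negPf ij /negPf ik]; rewrite /z ij ik.
rewrite /Q (sum_supp _ _ uT) => [|i /zT zi]; last first.
  by apply: big1 => l _; rewrite zi !mul0r.
rewrite !big_cons !big_nil (sum_supp _ _ uT) => [|l /zT zl]; last by rewrite zl mulr0.
rewrite (sum_supp _ _ uT) => [|l /zT zl]; last by rewrite zl mulr0.
rewrite !big_cons !big_nil zj zk /Bm !hCjj.
have := hd0 j; have := hd0 k; move: (d j) (d k) (C j k) (C k j) h4 => a b x y h4 ha hb.
have e : (2 * b)%:Z * ((a%:Z) * 2) * (2 * b)%:Z + ((2 * b)%:Z * (a%:Z * x) * - (a%:Z * x) + 0) +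
  (- (a%:Z * x) * (b%:Z * y) * (2 * b)%:Z + (- (a%:Z * x) * (b%:Z * 2) * - (a%:Z * x) + 0) + 0)
  = 2 * a%:Z * b%:Z * b%:Z * (4 - x * y) by rewrite !PoszM; ring.
rewrite e; apply: mulr_ge0_le0.
  by rewrite !mulr_ge0.
by rewrite subr_le0.
Qed.

Hypothesis hC0 : forall j k, C j k = 0 <-> C k j = 0.
Hypothesis hsym : forall j k, (d j)%:Z * C j k = (d k)%:Z * C k j.

Definition simpl_e (u v : 'I_n) := (C u v == -1) && (C v u == -1).
Definition rs (x u v : 'I_n) := simpl_e u v && (v != x).

Lemma simpl_d u v : simpl_e u v -> d u = d v.
Proof. case/andP => /eqP e1 /eqP e2; have := hsym u v; rewrite e1 e2; lia. Qed.

Lemma path_d x b p : path (rs x) b p -> forall v, v \in b :: p -> d v = d b.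
Proof.
elim: p b => [|c p IH] b /=; first by move=> _ v; rewrite inE => /eqP ->.
case/andP => /andP [hs _] hp v; rewrite inE => /orP [/eqP -> //|vp].
by rewrite (IH c hp v vp) (simpl_d _ _ hs).
Qed.

Lemma path_na x b p : path (rs x) b p -> forall v, v \in p -> v != x.
Proof.
elim: p b => [|c p IH] b //= /andP [/andP [_ hc] hp] v.
by rewrite inE => /orP [/eqP -> //|vp]; apply: IH hp v vp.
Qed.

Lemma connect_d x b v : connect (rs x) b v -> d v = d b.
Proof.
case/connectP => p hp ->; apply: path_d hp _ _.
by rewrite -[last _ _]/(last b p) mem_last.
Qed.

Lemma neg_of_nz u v : u != v -> C u v != 0 -> C u v < 0 /\ C v u < 0.
Proof.
move=> uv nz; have nz' : C v u != 0 by apply/eqP => /hC0 /eqP; rewrite (negPf nz).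
have vu : v != u by rewrite eq_sym.
have := hCneg _ _ uv; have := hCneg _ _ vu.
by rewrite !le_eqVlt (negPf nz) (negPf nz') /= => -> ->.
Qed.

Lemma reach_noedge a b v w : a != b -> C a b < 0 -> 2 <= C a b * C b a ->
  connect (rs a) b v -> ~~ connect (rs a) b w -> w != a -> C v w = 0.
Proof.
move=> ab hab2 hab3 cv ncw wa.
apply/eqP; apply/negP => nz.
have vw : v != w by apply: contraNneq ncw => <-.
have nz1 : C v w != 0 by apply/negP.
have [n1 n2] := neg_of_nz _ _ vw nz1.
have [sim|nsim] := boolP (simpl_e v w).
  by move/negP: ncw; apply; apply: connect_trans cv (connect1 _); rewrite /rs sim wa.
have m2 : 2 <= C w v * C v w.
  move: nsim; rewrite /simpl_e negb_and => /orP [/eqP h|/eqP h]; nia.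
case/connectP: cv => p hp; case: (shortenP hp) => p' hp' up' _ ev.
have aNin : a \notin b :: p'.
  rewrite inE negb_or ab /=; apply/negP => ap.
  by have := path_na _ _ _ hp' _ ap; rewrite eqxx.
have wNin : w \notin b :: p'.
  by apply/negP => /(path_connect hp') cw; move/negP: ncw; apply.
pose s := a :: (b :: p') ++ [:: w].
have sz : size s = (size p').+3 by rewrite /s /= size_cat /= addn1.
have nL1 : nth a s (size s).-1 = w.
  by rewrite sz /s /= nth_cat ltnn subnn.
have nL2 : nth a s (size s).-2 = v.
  by rewrite sz /s /= -cat_cons nth_cat /= ltnSn -last_nth -ev.
apply: (Kconf s a hpd) => //.
- rewrite /s cons_uniq mem_cat negb_or aNin /= inE eq_sym wa /=.
  case/andP: up' => bp up; move: wNin; rewrite inE negb_or => /andP [wb wp].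
  rewrite mem_cat negb_or bp inE eq_sym wb cat_uniq /= (negPf wp) /= !andbT; exact: up.
- by rewrite sz.
- move=> [|k] // _; rewrite sz !ltnS => kS.
  move/pathP: hp' => /(_ a k kS) h.
  rewrite /s /= -cat_cons !nth_cat /= !ltnS kS (ltnW kS) /=.
  by case/andP: h => /andP [/eqP -> /eqP ->].
- rewrite nL1 nL2; exact: n2.
- rewrite nL1 nL2; exact: m2.
Qed.

Hypothesis hind : forall S : {set 'I_n},
  (forall i j, i \in S -> j \notin S -> C i j = 0) -> S = set0 \/ S = setT.
Hypothesis hgcd : \big[gcdn/0%N]_(i < n) d i = 1%N.

Lemma lacing_ge j : (d j <= lacing d)%N.
Proof. exact: leq_bigmax. Qed.

Lemma finishG (m r : nat) (hi : 'I_n) : (r = 2 \/ r = 3)%N -> d hi = (r * m)%N ->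
  (forall v, d v = m \/ d v = (r * m)%N) ->
  forall j, d j = lacing d \/ (d j = 1 /\ (lacing d = 2 \/ lacing d = 3))%N.
Proof.
move=> hr hhi hv.
have m1 : m = 1%N.
  apply/eqP; rewrite -dvdn1 -hgcd; apply/dvdn_biggcdP => i _.
  by case: (hv i) => ->; rewrite ?dvdn_mull.
rewrite m1 muln1 in hhi hv.
have hl : lacing d = r.
  apply/eqP; rewrite eqn_leq; apply/andP; split; last by rewrite -hhi lacing_ge.
  by apply/bigmax_leqP => i _; case: (hv i) => ->; case: hr => ->.
move=> j; rewrite hl; case: (hv j) => ->; [right; split => //| by left].
Qed.

Hypothesis hn : (0 < n)%N.

Lemma G_all j : d j = lacing d \/ (d j = 1 /\ (lacing d = 2 \/ lacing d = 3))%N.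
Proof.
case: (boolP [exists a, exists b, (a != b) && (2 <= C a b * C b a)]).
  case/existsP => a /existsP [b /andP [ab hm]].
  have nz : C a b != 0 by apply: contraTneq hm => ->; rewrite mul0r.
  have [hab hba] := neg_of_nz _ _ ab nz.
  have ba : b != a by rewrite eq_sym.
  have hm' : 2 <= C b a * C a b by rewrite mulrC.
  pose Sb := [set v | connect (rs a) b v]; pose Sa := [set v | connect (rs b) a v].
  have aSa : a \in Sa by rewrite inE connect0.
  have bSb : b \in Sb by rewrite inE connect0.
  have cl : Sb :|: Sa = setT.
    case: (hind (Sb :|: Sa)) => [i k|e0|//].
      rewrite !inE negb_or => /orP [ib|ia] /andP [kb ka].
        apply: (reach_noedge _ _ _ _ ab hab hm ib kb).
        by apply: contraNneq ka => ->; rewrite connect0.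
      apply: (reach_noedge _ _ _ _ ba hba hm' ia ka).
      by apply: contraNneq kb => ->; rewrite connect0.
    have : a \in Sb :|: Sa by rewrite inE aSa orbT.
    by rewrite e0 inE.
  have hv v : d v = d b \/ d v = d a.
    have : v \in Sb :|: Sa by rewrite cl inE.
    by rewrite !inE => /orP [h|h]; [left|right]; apply: connect_d h.
  have h3 := hC3 _ _ ab; have hs := hsym a b.
  have := hd0 a; have := hd0 b => da db.
  have : (C a b = -1 /\ (C b a = -2 \/ C b a = -3)) \/ (C b a = -1 /\ (C a b = -2 \/ C a b = -3)) by nia.
  case=> [[e1 [e2|e2]]|[e1 [e2|e2]]]; rewrite e1 e2 in hs.
  - apply: (@finishG (d b) 2 a); [by left|lia|by move=> v; case: (hv v) => ->; [left|right; lia]].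
  - apply: (@finishG (d b) 3 a); [by right|lia|by move=> v; case: (hv v) => ->; [left|right; lia]].
  - apply: (@finishG (d a) 2 b); [by left|lia|by move=> v; case: (hv v) => ->; [right; lia|left]].
  - apply: (@finishG (d a) 3 b); [by right|lia|by move=> v; case: (hv v) => ->; [right; lia|left]].
move=> none.
pose j0 : 'I_n := Ordinal hn.
pose S := [set v | d v == d j0].
have j0S : j0 \in S by rewrite inE.
have cl : S = setT.
  case: (hind S) => [i k|e0|//].
    rewrite !inE => /eqP di dk; apply/eqP; apply/negP => nz.
    have ik : i != k by apply: contraNneq dk => <-; rewrite di.
    have [h1 h2] := neg_of_nz _ _ ik (introN idP nz).
    have hlt : C i k * C k i < 2.
      by rewrite ltNge; apply: contraNN none => h; apply/existsP; exists i; apply/existsP; exists k; rewrite ik h.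
    have hsi : simpl_e i k by rewrite /simpl_e; apply/andP; split; apply/eqP; nia.
    by move/negP: dk; apply; rewrite -(simpl_d _ _ hsi) di.
  by move: j0S; rewrite e0 inE.
have hall v : d v = d j0.
  have : v \in S by rewrite cl inE.
  by rewrite inE => /eqP.
have c1 : d j0 = 1%N.
  apply/eqP; rewrite -dvdn1 -hgcd; apply/dvdn_biggcdP => i _.
  by rewrite hall.
have hl : lacing d = 1%N.
  apply/eqP; rewrite eqn_leq; apply/andP; split; last by rewrite -c1 lacing_ge.
  by apply/bigmax_leqP => i _; rewrite hall c1.
by left; rewrite hall c1 hl.
Qed.
End Comb.
HB.instance Definition Tchari_add (R : realType) (n : nat) (C : 'M[int]_n) (d : 'I_n -> nat) (q : R[i]) (j : 'I_n) :=
  GRing.isZmodMorphism.Build (Mon R n) (Mon R n) (Tchari C d q j) (lift_is_additive _).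

Lemma zl (V : zmodType) (x y z : V) : x - (x + y - z) = z - y.
Proof. by rewrite opprB opprD addrCA addNKr. Qed.

Lemma zl2 (V : zmodType) (a b x y : V) : (a - x) + (b - y) = (a + b) - (x + y).
Proof. by rewrite addrACA opprD. Qed.

Lemma zl3 (V : zmodType) (a b c x y z : V) :
  (a - x) + (b - y) + (c - z) = (a + b + c) - (x + y + z).
Proof. by rewrite zl2 zl2. Qed.

Section Alg.
Variables (R : realType) (n : nat) (C : 'M[int]_n) (d : 'I_n -> nat) (q : R[i]).
Hypothesis hq : q != 0.
Local Notation inW := (W_laurent d q).
Local Notation T := (Tchari C d q).

Lemma inW0 : inW 0.
Proof. by exists [::]; rewrite big_nil. Qed.

Lemma inWD m1 m2 : inW m1 -> inW m2 -> inW (m1 + m2).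
Proof.
case=> s1 [h1 ->] [s2 [h2 ->]]; exists (s1 ++ s2).
by rewrite all_cat h1 h2 big_cat.
Qed.

Lemma inWZ k m : inW m -> inW (k *: m).
Proof.
case=> s [h ->]; exists [seq (x.1, k * x.2) | x <- s]; split.
  by rewrite all_map.
rewrite big_map scaler_sumr; apply: eq_bigr => x _; by rewrite scalerA.
Qed.

Lemma inWN m : inW m -> inW (- m).
Proof. move=> h; rewrite -scaleN1r; exact: inWZ. Qed.

Lemma inWB m1 m2 : inW m1 -> inW m2 -> inW (m1 - m2).
Proof. by move=> h1 h2; apply: inWD => //; apply: inWN. Qed.

Lemma inWW j b : b != 0 -> inW (Wm d q j b).
Proof. move=> hb; exists [:: (j, b, 1)]; by rewrite /= hb big_seq1 scale1r. Qed.

Lemma inW_sum (I : Type) (r : seq I) (P : pred I) (F : I -> Mon R n) :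
  (forall i, P i -> inW (F i)) -> inW (\sum_(i <- r | P i) F i).
Proof. move=> h; apply: big_ind => //; [exact: inW0 | exact: inWD]. Qed.

Lemma TZ j (k : int) m : T j (k *: m) = k *: T j m.
Proof. by rewrite -[k]intz !scaler_int raddfMz. Qed.

Lemma TY j k a : T j (Ym k a) = if k == j then Ym k a - Am C d q j (a * q ^+ d j) else Ym k a.
Proof. by rewrite /Tchari /Ym liftU scale1r. Qed.

Lemma inWT_all j : (forall k b, b != 0 -> inW (T j (Wm d q k b))) -> forall m, inW m -> inW (T j m).
Proof.
move=> h m [s [hs ->]]; rewrite raddf_sum big_seq; apply: inW_sum => x xs.
change (inW (T j (x.2 *: Wm d q x.1.1 x.1.2))).
rewrite TZ; apply: inWZ; apply: h.
by move/allP: hs; apply.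
Qed.

Definition P j k c : Mon R n :=
  if C k j == -1 then Ym k c
  else if C k j == -2 then Ym k (c / q) + Ym k (c * q)
  else if C k j == -3 then Ym k (c / q ^+ 2) + Ym k c + Ym k (c * q ^+ 2)
  else 0.

Lemma AmE j c : Am C d q j c =
  Ym j (c / q ^+ d j) + Ym j (c * q ^+ d j) - \sum_k P j k c.
Proof.
rewrite /Am; congr (_ - _).
rewrite !(big_mkcond (fun k => C k j == _)) -!big_split /=; apply: eq_bigr => k _.
rewrite /P; have [e|ne] := eqVneq (C k j) (-1).
  by rewrite e /= !addr0.
have [e2|ne2] := eqVneq (C k j) (-2).
  by rewrite e2 /= add0r addr0.
by rewrite !add0r.
Qed.

Lemma TYj j a : T j (Ym j a) =
  \sum_k P j k (a * q ^+ d j) - Ym j (a * q ^+ d j * q ^+ d j).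
Proof.
rewrite TY eqxx AmE mulfK ?expf_neq0 //.
by rewrite zl.
Qed.

Hypothesis hCjj : forall j, C j j = 2.
Hypothesis hCneg : forall j k, j != k -> C j k <= 0.
Hypothesis hC0 : forall j k, C j k = 0 <-> C k j = 0.
Hypothesis hC3 : forall j k, j != k -> C j k * C k j <= 3.
Hypothesis hsym : forall j k, (d j)%:Z * C j k = (d k)%:Z * C k j.
Hypothesis hd0 : forall j, (0 < d j)%N.
Hypothesis hdle : forall j, (d j <= lacing d)%N.
Hypothesis hG : forall j, d j = lacing d \/ (d j = 1 /\ (lacing d = 2 \/ lacing d = 3))%N.

Lemma nbr_facts j k : C k j < 0 -> k != j /\ C j k < 0 /\ C j k * C k j <= 3.
Proof.
move=> neg; have kj : k != j by apply/eqP => e; move: neg; rewrite e hCjj.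
have nz : C k j != 0 by rewrite lt_eqF.
have nz' : C j k != 0 by apply/eqP => /hC0 /eqP; rewrite (negPf nz).
have jk : j != k by rewrite eq_sym.
have h2 := hCneg _ _ jk; have h3 := hC3 _ _ jk.
by split=> //; split=> //; rewrite lt_neqAle nz' h2.
Qed.

Lemma WmL k c : d k = lacing d -> Wm d q k c = Ym k c.
Proof. by move=> h; rewrite /Wm h eqxx. Qed.

Lemma Wm2 k c : d k = 1%N -> lacing d = 2%N -> Wm d q k c = Ym k (c / q) + Ym k (c * q).
Proof. by move=> h h'; rewrite /Wm h h'. Qed.

Lemma Wm3 k c : d k = 1%N -> lacing d = 3%N ->
  Wm d q k c = Ym k (c / q ^+ 2) + Ym k c + Ym k (c * q ^+ 2).
Proof. by move=> h h'; rewrite /Wm h h'. Qed.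

Lemma Plong j k c : d j = lacing d -> c != 0 -> inW (P j k c).
Proof.
move=> hj hc; rewrite /P.
have hs := hsym k j; have hdk := hdle k; have hdk0 := hd0 k; have hdj0 := hd0 j.
have [e|ne] := eqVneq (C k j) (-1).
  have neg : C k j < 0 by rewrite e.
  have [kj [h1 h3]] := nbr_facts j k neg.
  have hk : d k = lacing d by rewrite e in hs; nia.
  rewrite -WmL //; exact: inWW.
have [e|ne2] := eqVneq (C k j) (-2).
  have neg : C k j < 0 by rewrite e.
  have [kj [h1 h3]] := nbr_facts j k neg.
  have [hk|[hk hD]] := hG k; first by rewrite e in hs h3; nia.
  have hD2 : lacing d = 2%N by rewrite e in hs h3; nia.
  rewrite -Wm2 //; apply: inWW => //.
have [e|ne3] := eqVneq (C k j) (-3).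
  have neg : C k j < 0 by rewrite e.
  have [kj [h1 h3]] := nbr_facts j k neg.
  have [hk|[hk hD]] := hG k; first by rewrite e in hs h3; nia.
  have hD3 : lacing d = 3%N by rewrite e in hs h3; nia.
  rewrite -Wm3 //; apply: inWW => //.
exact: inW0.
Qed.

Lemma Pshort2 j k b : d j = 1%N -> lacing d = 2%N -> b != 0 ->
  inW (P j k (b / q * q) + P j k (b * q * q)).
Proof.
move=> hj hD hb; rewrite divfK //; rewrite /P.
have hs := hsym k j; have hdk := hdle k; have hdk0 := hd0 k.
rewrite hj in hs.
have [e|ne] := eqVneq (C k j) (-1).
  have neg : C k j < 0 by rewrite e.
  have [kj [h1 h3]] := nbr_facts j k neg.
  have [hk|[hk _]] := hG k.
    by apply: inWD; rewrite -WmL //; apply: inWW; rewrite ?mulf_neq0 ?invr_neq0 ?expf_neq0.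
  by rewrite -{1}(mulfK hq b) -Wm2 //; apply: inWW; rewrite ?mulf_neq0 ?invr_neq0 ?expf_neq0.
have [e|ne2] := eqVneq (C k j) (-2).
  have neg : C k j < 0 by rewrite e.
  have [kj [h1 h3]] := nbr_facts j k neg.
  by rewrite e in hs h3; nia.
have [e|ne3] := eqVneq (C k j) (-3).
  have neg : C k j < 0 by rewrite e.
  have [kj [h1 h3]] := nbr_facts j k neg.
  by rewrite e in hs h3; nia.
rewrite addr0; exact: inW0.
Qed.

Lemma Pshort3 j k b : d j = 1%N -> lacing d = 3%N -> b != 0 ->
  inW (P j k (b / q ^+ 2 * q) + P j k (b * q) + P j k (b * q ^+ 2 * q)).
Proof.
move=> hj hD hb; rewrite /P.
have hs := hsym k j; have hdk := hdle k; have hdk0 := hd0 k.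
rewrite hj in hs.
have hq2 : q ^+ 2 != 0 by rewrite expf_neq0.
have [e|ne] := eqVneq (C k j) (-1).
  have neg : C k j < 0 by rewrite e.
  have [kj [h1 h3]] := nbr_facts j k neg.
  have [hk|[hk _]] := hG k.
    by apply: inWD; [apply: inWD|]; rewrite -WmL //; apply: inWW;
      rewrite ?mulf_neq0 ?invr_neq0.
  have e1 : b / q ^+ 2 * q = b * q / q ^+ 2 by field.
  have e2 : b * q ^+ 2 * q = b * q * q ^+ 2 by field.
  by rewrite e1 e2 -Wm3 //; apply: inWW; rewrite ?mulf_neq0 ?invr_neq0 ?expf_neq0.
have [e|ne2] := eqVneq (C k j) (-2).
  have neg : C k j < 0 by rewrite e.
  have [kj [h1 h3]] := nbr_facts j k neg.
  by rewrite e in hs h3; nia.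
have [e|ne3] := eqVneq (C k j) (-3).
  have neg : C k j < 0 by rewrite e.
  have [kj [h1 h3]] := nbr_facts j k neg.
  by rewrite e in hs h3; nia.
rewrite !addr0; exact: inW0.
Qed.

Lemma TWj j b : b != 0 -> inW (T j (Wm d q j b)).
Proof.
move=> hb; have [hj|[hj [hD|hD]]] := hG j.
- rewrite WmL // TYj; apply: inWB.
    by apply: inW_sum => k _; apply: Plong => //; rewrite mulf_neq0 ?expf_neq0.
  by rewrite -WmL //; apply: inWW; rewrite !mulf_neq0 ?expf_neq0.
- rewrite Wm2 // raddfD.
  change (inW (T j (Ym j (b / q)) + T j (Ym j (b * q)))).
  rewrite !TYj hj expr1 zl2 -big_split; apply: inWB.
    by apply: inW_sum => k _; apply: Pshort2.
  have e1 : b / q * q * q = b * q * q / q by field.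
  by rewrite e1 -Wm2 //; apply: inWW; rewrite ?mulf_neq0 ?invr_neq0 ?expf_neq0.
- rewrite Wm3 // !raddfD.
  change (inW (T j (Ym j (b / q ^+ 2)) + T j (Ym j b) + T j (Ym j (b * q ^+ 2)))).
  rewrite !TYj hj expr1 zl3 -!big_split; apply: inWB.
    by apply: inW_sum => k _; apply: Pshort3.
  have e1 : b / q ^+ 2 * q * q = b * q * q / q ^+ 2 by field.
  have e2 : b * q ^+ 2 * q * q = b * q * q * q ^+ 2 by field.
  by rewrite e1 e2 -Wm3 //; apply: inWW; rewrite ?mulf_neq0 ?invr_neq0 ?expf_neq0.
Qed.

Lemma TWk j k b : k != j -> T j (Wm d q k b) = Wm d q k b.
Proof.
move=> kj; rewrite /Wm.
case: ifP => _; first by rewrite TY (negPf kj).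
case: ifP => _; first by rewrite raddfD; change (T j (Ym k (b / q)) + T j (Ym k (b * q)) = Ym k (b / q) + Ym k (b * q)); rewrite !TY (negPf kj).
case: ifP => _; last by rewrite raddf0.
rewrite !raddfD.
change (T j (Ym k (b / q ^+ 2)) + T j (Ym k b) + T j (Ym k (b * q ^+ 2)) = Ym k (b / q ^+ 2) + Ym k b + Ym k (b * q ^+ 2)).
by rewrite !TY (negPf kj).
Qed.

Lemma inWT j m : inW m -> inW (T j m).
Proof.
apply: inWT_all => k b hb; have [->|kj] := eqVneq k j; first exact: TWj.
rewrite TWk //; exact: inWW.
Qed.

Lemma inWTword s m : inW m -> inW (Tword C d q s m).
Proof. elim: s => [//|j s IH] /= h; exact/inWT/IH. Qed.
End Alg.
Lemma posdef_int (n : nat) (C : 'M[int]_n) (d : 'I_n -> nat) :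
  (forall x : 'I_n -> rat, (exists i, x i != 0) ->
     0 < \sum_(i < n) \sum_(j < n) x i * ((d i)%:R * (C i j)%:~R) * x j) ->
  forall z : 'I_n -> int, (exists i, z i != 0) -> 0 < @Q _ C d z.
Proof.
move=> hpd z [i0 hi0].
have := hpd (fun i => (z i)%:~R); rewrite -(ltr0z rat).
have e : \sum_(i < n) \sum_(j < n) ((z i)%:~R : rat) * ((d i)%:R * (C i j)%:~R) * (z j)%:~R
    = (@Q _ C d z)%:~R.
  rewrite /Q rmorph_sum; apply: eq_bigr => i _; rewrite rmorph_sum; apply: eq_bigr => j _.
  by rewrite /Bm !rmorphM /= pmulrn.
rewrite e; apply; exists i0; by rewrite intr_eq0.
Qed.

Theorem mainTheorem2 (R : realType) (n : nat) (C : 'M[int]_n) (d : 'I_n -> nat)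
    (q : R[i]) :
  simple_cartan C d ->
  q != 0 -> (forall m : nat, (0 < m)%N -> q ^+ m != 1) ->
  forall i : 'I_n, (exists k : 'I_n, C k i < -1) ->
  forall s : seq 'I_n, reduced_word C s ->
    W_laurent d q (Tword C d q s (Ym i 1)).
Proof.
move=> [hn [hCjj [hCneg [hC0 [hd0 [hsym [hgcd [hpd hind]]]]]]]] hq _ i [k hk] s _.
have hpdi := @posdef_int n C d hpd.
have hC3' : forall j k, j != k -> C j k * C k j <= 3.
  by move=> j k' jk; exact: (hC3 n C d hCjj hd0 hpdi _ _ jk).
have hG := G_all n C d hCjj hCneg hd0 hpdi hC0 hsym hind hgcd hn.
have hdle : forall j, (d j <= lacing d)%N by move=> j; exact: lacing_ge n d j.
have hi : d i = lacing d.
  have neg : C k i < 0 by apply: lt_trans hk _.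
  have ki : k != i by apply/eqP => e; move: hk; rewrite e hCjj.
  have ik : i != k by rewrite eq_sym.
  have := hC3' _ _ ik; have := hCneg _ _ ik; have := hsym i k; have := hd0 k.
  have nz : C i k != 0 by apply/eqP => /hC0 e; move: neg; rewrite e ltxx.
  move: nz; case: (hG i) => // [[-> _]] nz; nia.
apply: (inWTword R n C d q hq hCjj hCneg hC0 hC3' hsym hd0 hdle hG).
rewrite -(WmL R n d q i 1 hi); apply: inWW; exact: oner_neq0.
Qed.
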